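(* Let $(E,P,\vartheta)$ be a complete bipolar metric space and let $F\colon E\cup P\to E\cup P$ satisfy $F(E)\subseteq E$, $F(P)\subseteq P$. Suppose there exist $\pi\in(0,1)$, an integer $\sigma\geq 1$ and constants $q_1,\dots,q_\sigma\in(0,\infty)$ such that $$\sum_{\upsilon=1}^{\sigma} q_\upsilon\,\vartheta^\upsilon(Fe,Ff)\leq\pi\sum_{\upsilon=1}^{\sigma}q_\upsilon\,\vartheta^\upsilon(e,f)\quad\text{for all } e\in E,\ f\in P.$$ Then $F$ has a unique fixed point.
   Context: A bipolar metric space is a triple $(E,P,\vartheta)$ where $E,P$ are nonempty sets and $\vartheta\colon E\times P\to[0,\infty)$ satisfies: (1) for $e\in E$, $f\in P$, $\vartheta(e,f)=0$ iff $e=f$; (2) $\vartheta(e,f)=\vartheta(f,e)$ whenever $e,f\in E\cap P$; (3) $\vartheta(e,f)\leq\vartheta(e,z)+\vartheta(r,z)+\vartheta(r,f)$ for all $e,r\in E$, $z,f\in P$. A sequence $(x_n)$ in $E$ converges to $y\in P$ if $\vartheta(x_n,y)\to0$; a sequence $(y_n)$ in $P$ converges to $x\in E$ if $\vartheta(x,y_n)\to0$. A bisequence $(x_n,y_n)$ with $x_n\in E$, $y_n\in P$ is Cauchy if for every $\varepsilon>0$ there is $N$ with $\vartheta(x_n,y_m)<\varepsilon$ for all $n,m\geq N$; the space is complete if every Cauchy bisequence is convergent. $\vartheta^\upsilon$ denotes the $\upsilon$-th power of $\vartheta$. A fixed point of $F$ is a point $g$ with $Fg=g$. *)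

(* Defs.v *)
From Stdlib Require Import Reals.
Open Scope R_scope.

(* A bipolar metric space (E, P, d) is modelled inside an ambient type X:
   E and P are predicates (subsets) of X, so that E ∩ P and E ∪ P make sense,
   and d : X -> X -> R is only meaningful on E × P. *)
Definition bipolar_metric {X : Type} (E P : X -> Prop) (d : X -> X -> R) : Prop :=
  (exists e, E e) /\ (exists f, P f) /\
  (forall e f, E e -> P f -> 0 <= d e f) /\
  (forall e f, E e -> P f -> (d e f = 0 <-> e = f)) /\
  (forall e f, E e -> P e -> E f -> P f -> d e f = d f e) /\
  (forall e r z f, E e -> E r -> P z -> P f ->
     d e f <= d e z + d r z + d r f).

Definition bp_conv_left {X : Type} (d : X -> X -> R) (x : nat -> X) (y : X) : Prop :=
  forall eps, 0 < eps -> exists N, forall n, (N <= n)%nat -> d (x n) y < eps.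

Definition bp_conv_right {X : Type} (d : X -> X -> R) (y : nat -> X) (x : X) : Prop :=
  forall eps, 0 < eps -> exists N, forall n, (N <= n)%nat -> d x (y n) < eps.

Definition bp_cauchy {X : Type} (d : X -> X -> R) (x y : nat -> X) : Prop :=
  forall eps, 0 < eps -> exists N, forall n m, (N <= n)%nat -> (N <= m)%nat ->
    d (x n) (y m) < eps.

Definition bp_convergent {X : Type} (E P : X -> Prop) (d : X -> X -> R)
  (x y : nat -> X) : Prop :=
  (exists b, P b /\ bp_conv_left d x b) /\ (exists a, E a /\ bp_conv_right d y a).

Definition bp_complete {X : Type} (E P : X -> Prop) (d : X -> X -> R) : Prop :=
  forall x y : nat -> X, (forall n, E (x n)) -> (forall n, P (y n)) ->
    bp_cauchy d x y -> bp_convergent E P d x y.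

Definition weighted_pow_sum (q : nat -> R) (sigma : nat) (t : R) : R :=
  sum_f_R0 (fun i => q (S i) * t ^ (S i)) (pred sigma).

(* Main.v *)
Require Import Defs.
From Stdlib Require Import Reals.
From Stdlib Require Import Lra Lia Psatz.
Open Scope R_scope.

Lemma W_lower (q : nat -> R) (t : R) (n : nat) :
  (forall i, (i <= n)%nat -> 0 <= q (S i)) -> 0 <= t ->
  q 1%nat * t <= sum_f_R0 (fun i => q (S i) * t ^ (S i)) n.
Proof.
  intros Hq Ht. induction n as [|n IH]; simpl.
  - lra.
  - assert (0 <= q (S (S n)) * (t * (t * t ^ n))).
    { apply Rmult_le_pos. apply Hq; lia.
      apply Rmult_le_pos; auto. apply Rmult_le_pos; auto. apply pow_le; auto. }
    assert (q 1%nat * t <= sum_f_R0 (fun i => q (S i) * t ^ (S i)) n).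
    { apply IH. intros; apply Hq; lia. }
    simpl in *. lra.
Qed.

Lemma W_upper (q : nat -> R) (t : R) (n : nat) :
  (forall i, (i <= n)%nat -> 0 <= q (S i)) -> 0 <= t <= 1 ->
  sum_f_R0 (fun i => q (S i) * t ^ (S i)) n <= sum_f_R0 (fun i => q (S i)) n * t.
Proof.
  intros Hq Ht.
  assert (Hp : forall k, t ^ S k <= t).
  { intro k. simpl. assert (t ^ k <= 1).
    { rewrite <- (pow1 k). apply pow_incr. lra. }
    assert (0 <= t ^ k) by (apply pow_le; lra). nra. }
  induction n as [|n IH]; simpl.
  - specialize (Hp 0%nat). specialize (Hq 0%nat (le_n 0)). simpl in Hp. nra.
  - assert (sum_f_R0 (fun i => q (S i) * t ^ (S i)) n <= sum_f_R0 (fun i => q (S i)) n * t).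
    { apply IH. intros; apply Hq; lia. }
    specialize (Hp (S n)). specialize (Hq (S n) (le_n _)). simpl in *. nra.
Qed.

Lemma pow_decr (p : R) (N n : nat) : 0 <= p <= 1 -> (N <= n)%nat -> p ^ n <= p ^ N.
Proof.
  intros Hp Hn. replace n with (N + (n - N))%nat by lia. rewrite pow_add.
  assert (p ^ (n - N) <= 1) by (rewrite <- (pow1 (n - N)); apply pow_incr; lra).
  assert (0 <= p ^ (n - N)) by (apply pow_le; lra).
  assert (0 <= p ^ N) by (apply pow_le; lra). nra.
Qed.

Lemma zero_of_small (x : R) : 0 <= x -> (forall eps, 0 < eps -> x <= eps) -> x = 0.
Proof.
  intros H0 H. destruct (Req_dec x 0); auto.
  specialize (H (x / 2)). lra.
Qed.

Fixpoint it {X : Type} (F : X -> X) (n : nat) (x : X) : X :=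
  match n with O => x | S n => F (it F n x) end.

Lemma it_shift {X : Type} (F : X -> X) n x : it F n (F x) = it F (S n) x.
Proof. induction n; simpl in *; congruence. Qed.

Theorem corollary3p6 (X : Type) (E P : X -> Prop) (d : X -> X -> R) (F : X -> X)
  (Hbp : bipolar_metric E P d) (Hcomp : bp_complete E P d)
  (HFE : forall e, E e -> E (F e)) (HFP : forall f, P f -> P (F f))
  (pi : R) (Hpi : 0 < pi < 1) (sigma : nat) (Hsigma : (1 <= sigma)%nat)
  (q : nat -> R) (Hq : forall v, (1 <= v <= sigma)%nat -> 0 < q v)
  (Hcontr : forall e f, E e -> P f ->
     weighted_pow_sum q sigma (d (F e) (F f)) <= pi * weighted_pow_sum q sigma (d e f)) :
  exists g, (E g \/ P g) /\ F g = g /\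
    forall h, (E h \/ P h) -> F h = h -> h = g.
Proof.
  destruct Hbp as [[e0 He0] [[f0 Hf0] [Hpos [Hzero [Hsym Htri]]]]].
  set (W := weighted_pow_sum q sigma).
  assert (Hqi : forall i, (i <= pred sigma)%nat -> 0 <= q (S i)).
  { intros i Hi. left. apply Hq. lia. }
  assert (Hq1 : 0 < q 1%nat) by (apply Hq; lia).
  set (S0 := sum_f_R0 (fun i => q (S i)) (pred sigma)).
  assert (Wlo : forall t, 0 <= t -> q 1%nat * t <= W t).
  { intros t Ht. unfold W, weighted_pow_sum. apply W_lower; auto. }
  assert (Whi : forall t, 0 <= t <= 1 -> W t <= S0 * t).
  { intros t Ht. unfold W, weighted_pow_sum, S0. apply W_upper; auto. }
  assert (HS0 : 0 <= S0).
  { assert (H := Wlo 1 ltac:(lra)). assert (H' := Whi 1 ltac:(lra)). lra. }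
  assert (dW : forall e f, E e -> P f -> d e f <= W (d e f) / q 1%nat).
  { intros e f He Hf. apply Rmult_le_reg_l with (q 1%nat); auto.
    field_simplify; [|lra]. apply Wlo; auto. }
  assert (Hit : forall n e f, E e -> P f ->
     W (d (it F n e) (it F n f)) <= pi ^ n * W (d e f)).
  { induction n; intros e f He Hf; simpl.
    - lra.
    - assert (E (it F n e)) by (clear -He HFE; induction n; simpl; auto).
      assert (P (it F n f)) by (clear -Hf HFP; induction n; simpl; auto).
      specialize (Hcontr _ _ H H0). specialize (IHn e f He Hf).
      unfold W in *. nra. }
  set (e := fun n => it F n e0). set (f := fun n => it F n f0).
  assert (HE : forall n, E (e n)) by (intro n; unfold e; induction n; simpl; auto).
  assert (HP : forall n, P (f n)) by (intro n; unfold f; induction n; simpl; auto).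
  set (K := (W (d e0 f0) + W (d (F e0) f0) + W (d e0 (F f0))) / q 1%nat).
  assert (HW0 : forall x y, E x -> P y -> 0 <= W (d x y)).
  { intros x y Hx Hy. assert (H := Wlo _ (Hpos x y Hx Hy)).
    assert (0 <= d x y) by auto. nra. }
  assert (HF0 : E (F e0)) by auto. assert (HF1 : P (F f0)) by auto.
  assert (bnd : forall n x y, E x -> P y -> d (it F n x) (it F n y) <= pi ^ n * (W (d x y) / q 1%nat)).
  { intros n x y Hx Hy.
    assert (E (it F n x)) by (clear -Hx HFE; induction n; simpl; auto).
    assert (P (it F n y)) by (clear -Hy HFP; induction n; simpl; auto).
    eapply Rle_trans. apply dW; auto.
    unfold Rdiv. rewrite <- Rmult_assoc. apply Rmult_le_compat_r.
    left; apply Rinv_0_lt_compat; auto. apply Hit; auto. }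
  assert (HK1 : forall n, d (e n) (f n) <= pi ^ n * K).
  { intro n. eapply Rle_trans. apply bnd; auto. apply Rmult_le_compat_l.
    apply pow_le; lra. unfold K. unfold Rdiv. apply Rmult_le_compat_r.
    left; apply Rinv_0_lt_compat; auto.
    assert (H1 := HW0 _ _ HF0 Hf0). assert (H2 := HW0 _ _ He0 HF1). lra. }
  assert (HK2 : forall n, d (e (S n)) (f n) <= pi ^ n * K).
  { intro n. unfold e. rewrite <- it_shift. eapply Rle_trans. apply bnd; auto.
    apply Rmult_le_compat_l.
    apply pow_le; lra. unfold K. unfold Rdiv. apply Rmult_le_compat_r.
    left; apply Rinv_0_lt_compat; auto.
    assert (H1 := HW0 _ _ He0 Hf0). assert (H2 := HW0 _ _ He0 HF1). lra. }
  assert (HK3 : forall n, d (e n) (f (S n)) <= pi ^ n * K).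
  { intro n. unfold f. rewrite <- it_shift. eapply Rle_trans. apply bnd; auto.
    apply Rmult_le_compat_l.
    apply pow_le; lra. unfold K. unfold Rdiv. apply Rmult_le_compat_r.
    left; apply Rinv_0_lt_compat; auto.
    assert (H1 := HW0 _ _ He0 Hf0). assert (H2 := HW0 _ _ HF0 Hf0). lra. }
  assert (HKpos : 0 <= K).
  { assert (H := Hpos _ _ (HE 0%nat) (HP 0%nat)). assert (H' := HK1 0%nat). simpl in H'. lra. }
  set (C := 2 * K / (1 - pi)).
  assert (HC : 2 * K <= C).
  { unfold C. apply Rmult_le_reg_r with (1 - pi). lra. field_simplify; nra. }
  assert (HCe : 2 * K + pi * C = C) by (unfold C; field; lra).
  assert (B1 : forall k n, d (e n) (f (n + k)%nat) <= pi ^ n * C).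
  { induction k; intro n.
    - rewrite Nat.add_0_r. eapply Rle_trans. apply HK1.
      assert (0 <= pi ^ n) by (apply pow_le; lra). nra.
    - replace (n + S k)%nat with (S n + k)%nat by lia.
      eapply Rle_trans. apply (Htri _ (e (S n)) (f n)); auto.
      specialize (IHk (S n)). specialize (HK1 n). specialize (HK2 n).
      simpl in IHk |- *. assert (0 <= pi ^ n) by (apply pow_le; lra).
      rewrite <- HCe. nra. }
  assert (B2 : forall k n, d (e (n + k)%nat) (f n) <= pi ^ n * C).
  { induction k; intro n.
    - rewrite Nat.add_0_r. eapply Rle_trans. apply HK1.
      assert (0 <= pi ^ n) by (apply pow_le; lra). nra.
    - replace (n + S k)%nat with (S n + k)%nat by lia.
      eapply Rle_trans. apply (Htri _ (e n) (f (S n))); auto.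
      specialize (IHk (S n)). specialize (HK1 n). specialize (HK3 n).
      simpl in IHk |- *. assert (0 <= pi ^ n) by (apply pow_le; lra).
      rewrite <- HCe. nra. }
  assert (Hcau : bp_cauchy d e f).
  { intros eps Heps.
    destruct (pow_lt_1_zero pi ltac:(rewrite Rabs_pos_eq; lra) (eps / (C + 1)))
      as [N HN].
    { apply Rdiv_lt_0_compat; lra. }
    exists N. intros n m Hn Hm.
    assert (Hb : forall k, (N <= k)%nat -> pi ^ k * C < eps).
    { intros k Hk. specialize (HN k Hk). rewrite Rabs_pos_eq in HN by (apply pow_le; lra).
      assert (pi ^ k * (C + 1) < eps).
      { apply Rmult_lt_reg_r with (/ (C+1)). apply Rinv_0_lt_compat; lra.
        rewrite Rmult_assoc, Rinv_r by lra. lra. }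
      assert (0 <= pi ^ k) by (apply pow_le; lra). nra. }
    destruct (Nat.le_ge_cases n m) as [Hnm|Hnm].
    - replace m with (n + (m - n))%nat by lia. eapply Rle_lt_trans. apply B1. apply Hb; lia.
    - replace n with (m + (n - m))%nat by lia. eapply Rle_lt_trans. apply B2. apply Hb; lia. }
  destruct (Hcomp e f HE HP Hcau) as [[b [Hb Hlb]] [a [Ha Hra]]].
  assert (Hab : a = b).
  { apply Hzero; auto. apply zero_of_small. apply Hpos; auto.
    intros eps Heps.
    destruct (Hlb (eps/3) ltac:(lra)) as [N1 H1].
    destruct (Hra (eps/3) ltac:(lra)) as [N2 H2].
    destruct (Hcau (eps/3) ltac:(lra)) as [N3 H3].
    set (n := (N1 + N2 + N3)%nat).
    specialize (H1 n ltac:(unfold n; lia)). specialize (H2 n ltac:(unfold n; lia)).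
    specialize (H3 n n ltac:(unfold n; lia) ltac:(unfold n; lia)).
    eapply Rle_trans. apply (Htri _ (e n) (f n)); auto. lra. }
  subst b.
  assert (Hfix : F a = a).
  { apply Hzero; auto. apply zero_of_small. apply Hpos; auto.
    intros eps Heps.
    set (c := pi * S0 / q 1%nat).
    assert (Hc : 0 <= c) by (unfold c; apply Rmult_le_pos; [nra|left; apply Rinv_0_lt_compat; auto]).
    set (delta := Rmin 1 (eps / (3 * (c + 1)))).
    assert (Hdel : 0 < delta).
    { unfold delta. apply Rmin_glb_lt. lra. apply Rdiv_lt_0_compat; lra. }
    destruct (Hlb (eps/3) ltac:(lra)) as [N1 H1].
    destruct (Hra delta Hdel) as [N2 H2].
    destruct (Hcau (eps/3) ltac:(lra)) as [N3 H3].
    set (n := (N1 + N2 + N3)%nat).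
    specialize (H1 (S n) ltac:(unfold n; lia)). specialize (H2 n ltac:(unfold n; lia)).
    specialize (H3 (S n) (S n) ltac:(unfold n; lia) ltac:(unfold n; lia)).
    assert (Hd : d (F a) (f (S n)) <= eps / 3).
    { assert (Hd0 : 0 <= d a (f n)) by auto.
      assert (Hd1 : d a (f n) <= 1) by (assert (delta <= 1) by apply Rmin_l; lra).
      assert (Hd2 : d a (f n) <= eps / (3 * (c + 1))) by
        (assert (delta <= eps / (3 * (c + 1))) by apply Rmin_r; lra).
      assert (Hx : d (F a) (f (S n)) <= c * d a (f n)).
      { change (f (S n)) with (F (f n)).
        eapply Rle_trans. apply dW; auto.
        unfold c, Rdiv. 
        assert (W (d (F a) (F (f n))) <= pi * (S0 * d a (f n))).
        { eapply Rle_trans. apply Hcontr; auto. apply Rmult_le_compat_l. lra.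
          apply Whi; auto. }
        assert (0 < / q 1%nat) by (apply Rinv_0_lt_compat; auto).
        nra. }
      assert (c * d a (f n) <= c * (eps / (3 * (c + 1)))) by (apply Rmult_le_compat_l; auto).
      assert (c * (eps / (3 * (c + 1))) <= eps / 3).
      { replace (c * (eps / (3 * (c + 1)))) with ((eps/3) * (c / (c + 1))) by (field; lra).
        assert (c / (c+1) <= 1).
        { apply Rmult_le_reg_r with (c + 1). lra. field_simplify; lra. }
        nra. }
      lra. }
    eapply Rle_trans. apply (Htri _ (e (S n)) (f (S n))); auto. lra. }
  exists a. split; [left; auto|]. split; auto.
  assert (Huniq : forall x y, E x -> P y -> F x = x -> F y = y -> x = y).
  { intros x y Hx Hy Fx Fy. apply Hzero; auto.
    assert (H := Hcontr x y Hx Hy). rewrite Fx, Fy in H.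
    assert (H0 := HW0 x y Hx Hy). assert (Hw : W (d x y) = 0) by (unfold W in *; nra).
    assert (H1 := Wlo _ (Hpos x y Hx Hy)). assert (H2 := Hpos x y Hx Hy). nra. }
  intros h [Hh|Hh] Fh.
  - apply Huniq; auto.
  - symmetry. apply Huniq; auto.
Qed.
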